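(* Let $q:\mathcal U\to\mathbb R^p$ be continuous, differentiable on $\mathrm{Int}(\mathcal U)$, with $Dq$ symmetric and positive definite on $\mathrm{Int}(\mathcal U)$, and suppose $\mathcal Y:=q(\mathcal U)$ is convex. Then $q(u)\in\mathrm{Int}(\mathcal Y)$ for every $u\in\mathrm{Int}(\mathcal U)$.
   Context: $\mathcal U\subset\mathbb R^p$ is a compact convex set with nonempty interior. $Dq$ denotes the Jacobian of $q$. *)

(* Defs.v *)
From HB Require Import structures.
From mathcomp Require Import all_boot all_order all_algebra.
From mathcomp Require Import all_classical all_reals all_analysis.
Set Implicit Arguments. Unset Strict Implicit. Unset Printing Implicit Defensive.
Import Order.TTheory GRing.Theory Num.Theory.
Import numFieldNormedType.Exports.
Local Open Scope ring_scope.
Local Open Scope classical_set_scope.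

Definition convex_rV (R : realType) (p : nat) (A : set 'rV[R]_p) : Prop :=
  convex_set (A : set (convex_lmodType 'rV[R]_p)).

Definition sym_posdef (R : realType) (p : nat) (M : 'M[R]_p) : Prop :=
  M^T = M /\ forall v : 'rV[R]_p, v != 0 -> 0 < (v *m M *m v^T) 0 0.

(* Main.v *)
Require Import Defs.
From HB Require Import structures.
From mathcomp Require Import all_boot all_order all_algebra.
From mathcomp Require Import all_classical all_reals all_analysis.
From mathcomp Require Import ring lra.
Import Order.TTheory GRing.Theory Num.Theory Num.Def.
Import numFieldNormedType.Exports.
Local Open Scope ring_scope.
Local Open Scope classical_set_scope.
Local Open Scope convex_scope.
Set Implicit Arguments. Unset Strict Implicit.

Section Helpers.
Variables (R : realType) (p : nat).
Implicit Types a b v w : 'rV[R]_p.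

Definition dot a b := \sum_(i < p) a 0 i * b 0 i.

Lemma term_le_sum (F : 'I_p -> R) j : (forall i, 0 <= F i) -> F j <= \sum_i F i.
Proof.
move=> F0; rewrite (bigD1 j) //= lerDl; apply: sumr_ge0 => i _; exact: F0.
Qed.

Lemma dot_ge0 v : 0 <= dot v v.
Proof. by apply: sumr_ge0 => i _; rewrite -expr2 sqr_ge0. Qed.

Lemma norm_entry v i : `|v 0 i| <= `|v|.
Proof.
have -> : `|v| = \big[maxr/0]_ij `|v ij.1 ij.2| by rewrite -mx_normrE.
exact: (le_bigmax _ _ (0, i)).
Qed.

Lemma norm_le v c : 0 <= c -> (forall i, `|v 0 i| <= c) -> `|v| <= c.
Proof.
move=> c0 H.
have -> : `|v| = \big[maxr/0]_ij `|v ij.1 ij.2| by rewrite -mx_normrE.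
apply: bigmax_le => // [[i j]] _ /=; rewrite [i]ord1; exact: H.
Qed.

Lemma norm2_le_dot v : `|v| ^+ 2 <= dot v v.
Proof.
have -> : `|v| = mx_norm v by [].
have [->|] := eqVneq (mx_norm v) 0.
  by rewrite expr0n /= dot_ge0.
move=> /mx_norm_neq0 [[i j] /= Hn].
rewrite Hn [i]ord1 real_normK ?num_real //.
rewrite /dot; apply: (term_le_sum (F := fun k => v 0 k * v 0 k)) => k.
by rewrite -expr2 sqr_ge0.
Qed.

Lemma dot_le v : dot v v <= (p.+1)%:R ^+ 2 * `|v| ^+ 2.
Proof.
apply: (@le_trans _ _ (\sum_(i < p) `|v| ^+ 2)).
  apply: ler_sum => i _; rewrite -expr2 -real_normK ?num_real //.
  by rewrite lerXn2r ?nnegrE // norm_entry.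
rewrite sumr_const card_ord -[_ *+ p]mulr_natl.
apply: ler_wpM2r; first by rewrite sqr_ge0.
rewrite -natrX ler_nat; apply: (@leq_trans p.+1) => //.
by rewrite -{1}(expn1 p.+1) leq_pexp2l.
Qed.

Lemma dot_lower a w : `|a| <= 1 -> - ((p.+1)%:R * `|w|) <= dot a w.
Proof.
move=> a1; rewrite lerNl.
apply: (@le_trans _ _ `|dot a w|); first by rewrite -normrN ler_norm.
apply: (le_trans (ler_norm_sum _ _ _)).
apply: (@le_trans _ _ (\sum_(i < p) `|w|)).
  apply: ler_sum => i _; rewrite normrM.
  rewrite -[X in _ <= X]mul1r ler_pM // (le_trans (norm_entry _ _)) // norm_entry.
rewrite sumr_const card_ord -[_ *+ p]mulr_natl.
by apply: ler_wpM2r => //; rewrite ler_nat.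
Qed.

Lemma dotZl k a w : dot (k *: a) w = k * dot a w.
Proof. rewrite /dot mulr_sumr; apply: eq_bigr => i _; rewrite mxE; ring. Qed.

Lemma dotDr a v w : dot a (v + w) = dot a v + dot a w.
Proof. rewrite /dot -big_split; apply: eq_bigr => i _; by rewrite mxE mulrDr. Qed.

Lemma dotZr k a w : dot a (k *: w) = k * dot a w.
Proof. rewrite /dot mulr_sumr; apply: eq_bigr => i _; rewrite mxE; ring. Qed.

Lemma dot_expand a d (l : R) :
  dot (a - l *: d) (a - l *: d) = dot a a - 2 * l * dot a d + l ^+ 2 * dot d d.
Proof.
rewrite /dot mulr_sumr mulr_sumr -sumrB -big_split /=; apply: eq_bigr => i _.
rewrite !mxE; ring.
Qed.

Lemma dot_cont z : continuous (fun y : 'rV[R]_p => dot (z - y) (z - y)).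
Proof.
rewrite /dot; apply: continuous_big.
  exact: add_continuous.
move=> i _ x.
have -> : (fun x : 'rV[R]_p => (z - x) 0 i * (z - x) 0 i) = (fun x => (z 0 i - x 0 i) * (z 0 i - x 0 i)).
  by apply: funext => y; rewrite !mxE.
have hc : {for x, continuous (fun x : 'rV[R]_p => (z 0 i - x 0 i))}.
  apply: (@continuousB _ _ _ (fun=> z 0 i) (fun x : 'rV[R]_p => x 0 i)).
    exact: cst_continuous.
  exact: coord_continuous.
exact: (continuousM hc hc).
Qed.

End Helpers.
Section Helpers2.
Variables (R : realType) (p : nat).

Lemma exists_proj (Y : set 'rV[R]_p) z : compact Y -> Y !=set0 ->
  exists2 P, Y P & forall y, Y y -> dot (z - P) (z - P) <= dot (z - y) (z - y).
Proof.
move=> cY Y0.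
have [c cY' Hc] := @EVT_min_rV R p (fun y => dot (z - y) (z - y)) Y Y0 cY
  (continuous_subspaceT (@dot_cont R p z)).
exists c; first by move: cY'; rewrite inE.
by move=> y Yy; apply: Hc; rewrite inE.
Qed.

Lemma var_ineq (Y : set 'rV[R]_p) z P : convex_rV Y -> Y P ->
  (forall y, Y y -> dot (z - P) (z - P) <= dot (z - y) (z - y)) ->
  forall y, Y y -> dot (z - P) (y - P) <= 0.
Proof.
move=> cvY YP Hmin y Yy.
set a := z - P; set d := y - P.
have key : forall l : R, 0 <= l -> l <= 1 -> 2 * l * dot a d <= l ^+ 2 * dot d d.
  move=> l l0 l1.
  have Yl : Y (l *: y + (1 - l) *: P).
    have := cvY y P (Itv01 l0 l1) (mem_set Yy) (mem_set YP).
    by rewrite inE.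
  have := Hmin _ Yl.
  have -> : z - (l *: y + (1 - l) *: P) = a - l *: d.
    by apply/rowP => i; rewrite /a /d !mxE; ring.
  rewrite dot_expand; lra.
have dd0 := dot_ge0 d.
rewrite leNgt; apply/negP => ad0.
have s0 : 0 < dot a d + dot d d by lra.
have l0 : 0 <= dot a d / (dot a d + dot d d) by rewrite divr_ge0 // ltW.
have l1 : dot a d / (dot a d + dot d d) <= 1 by rewrite ler_pdivrMr // mul1r; lra.
have := key _ l0 l1.
set l := dot a d / (dot a d + dot d d).
have lpos : 0 < l by rewrite divr_gt0.
have e : l * (dot a d + dot d d) = dot a d by rewrite /l mulfVK // gt_eqF.
nra.
Qed.

End Helpers2.
Section Helpers3.
Variables (R : realType) (p : nat).

Lemma posdef_unit (M : 'M[R]_p) : sym_posdef M -> M \in unitmx.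
Proof.
move=> [_ H]; rewrite unitmxE unitfE; apply/negP => /det0P [v v0 vM].
by have := H v v0; rewrite vM mul0mx mxE ltxx.
Qed.

Lemma mulN_bound (N : 'M[R]_p) (v : 'rV[R]_p) : `|v| <= 1 ->
  `|v *m N| <= 1 + \sum_i \sum_j `|N i j|.
Proof.
move=> v1.
have S0 : 0 <= \sum_i \sum_j `|N i j| by apply: sumr_ge0 => i _; apply: sumr_ge0.
apply: norm_le; first lra.
move=> j; rewrite mxE.
apply: (le_trans (ler_norm_sum _ _ _)).
apply: (@le_trans _ _ (\sum_i \sum_j `|N i j|)); last lra.
apply: ler_sum => i _; rewrite normrM.
apply: (@le_trans _ _ `|N i j|).
  rewrite -[X in _ <= X]mul1r ler_wpM2r // (le_trans (norm_entry _ _)) //.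
exact: (term_le_sum (F := fun j => `|N i j|)).
Qed.

Lemma diff_eps (f : 'rV[R]_p -> 'rV[R]_p) u : differentiable f u ->
  forall e, 0 < e -> exists2 d, 0 < d &
  forall h, `|h| < d -> `|f (u + h) - f u - h *m 'J f u| <= e * `|h|.
Proof.
move=> df e e0.
have := diff_locally df.
move/eqaddoP => /(_ e e0) /nbhs_norm0P [d d0 Hd].
exists d => // h hd.
have := Hd h hd.
rewrite /jacobian mul_rV_lin1 /=.
have -> : (f \o +%R^~ u - (cst (f u) + 'd f u)) h = f (u + h) - f u - 'd f u h.
  transitivity (f (h + u) - (f u + 'd f u h)); first by [].
  by rewrite opprD addrA (addrC h u).
done.
Qed.

End Helpers3.
Theorem mainTheorem11 (R : realType) (p : nat) (U : set 'rV[R]_p)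
  (q : 'rV[R]_p -> 'rV[R]_p) :
  compact U -> convex_rV U -> interior U !=set0 ->
  {within U, continuous q} ->
  (forall u, interior U u -> differentiable q u) ->
  (forall u, interior U u -> sym_posdef ('J q u)) ->
  convex_rV (q @` U) ->
  forall u, interior U u -> interior (q @` U) (q u).
Proof.
move=> cU cvU U0 qc qd qpd cvY u uint.
have cY : compact (q @` U) := continuous_compact qc cU.
have Yy0 : (q @` U) (q u) by exists u => //; exact: interior_subset.
have Y0 : (q @` U) !=set0 by exists (q u).
have Mu : 'J q u \in unitmx := posdef_unit (qpd u uint).
set N := invmx ('J q u).
set C := 1 + \sum_i \sum_j `|N i j|.
have C1 : 1 <= C.
  have : 0 <= \sum_i \sum_j `|N i j| by apply: sumr_ge0 => i _; apply: sumr_ge0.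
  rewrite /C; lra.
set k : R := (p.+1)%:R.
have k1 : 1 <= k by rewrite /k ler1n.
set eps := (4 * k * C)^-1.
have eps0 : 0 < eps by rewrite invr_gt0; apply: mulr_gt0; [apply: mulr_gt0|]; lra.
have [d1 d10 Hd1] := diff_eps (qd u uint) eps0.
have [d2 d20 Hd2] : exists2 d, 0 < d & forall x, `|u - x| < d -> U x.
  move: uint => /nbhs_ballP [d d0 Hd].
  by exists d => // x hx; apply: Hd; rewrite -ball_normE /=.
set tau := minr d1 d2 / (2 * C).
have mpos : 0 < minr d1 d2 by rewrite lt_min d10 d20.
have tau0 : 0 < tau by rewrite divr_gt0 // mulr_gt0 //; lra.
have tauC : tau * C = minr d1 d2 / 2.
  have Cn : C != 0 by apply: lt0r_neq0; lra.
  by rewrite /tau; field.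
have tauC1 : tau * C < d1.
  rewrite tauC; have : minr d1 d2 <= d1 by rewrite ge_min lexx.
  lra.
have tauC2 : tau * C < d2.
  rewrite tauC; have : minr d1 d2 <= d2 by rewrite ge_min lexx orbT.
  lra.
apply: contrapT => Hn.
set eta := tau / (4 * k ^+ 2).
have eta0 : 0 < eta by rewrite divr_gt0 // mulr_gt0 // exprn_gt0 //; lra.
have [z zy0 zY] : exists2 z, `|q u - z| < eta & ~ (q @` U) z.
  apply: contrapT => Hz; apply: Hn; apply/nbhs_ballP; exists eta => // y hy.
  move: hy; rewrite -ball_normE /= => hy.
  by apply: contrapT => ny; apply: Hz; exists y.
have [P YP Pmin] := exists_proj z cY Y0.
have vi := var_ineq cvY YP Pmin.
set a := z - P.
have a0 : a != 0.
  apply/eqP => a0; apply: zY.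
  suff -> : z = P by [].
  by apply/eqP; rewrite -subr_eq0 -/a a0.
set m := `|a|.
have m0 : 0 < m by rewrite normr_gt0.
set ah := m^-1 *: a.
have ah1 : `|ah| = 1 by rewrite normrZ ger0_norm ?invr_ge0 ?ltW // mulVf // gt_eqF.
set h := tau *: (ah *m N).
have hn : `|h| <= tau * C.
  rewrite normrZ (ger0_norm (ltW tau0)) ler_pM2l //.
  by apply: mulN_bound; rewrite ah1.
have Ux : U (u + h).
  apply: Hd2; rewrite opprD addrA subrr sub0r normrN.
  exact: le_lt_trans hn tauC2.
have Yqx : (q @` U) (q (u + h)) by exists (u + h).
have ineq := vi _ Yqx.
have ineq' : dot ah (q (u + h) - P) <= 0.
  by rewrite dotZl mulr_ge0_le0 // invr_ge0 ltW.
have hM : h *m 'J q u = tau *: ah.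
  by rewrite /h -scalemxAl -mulmxA mulVmx // mulmx1.
set E := q (u + h) - q u - h *m 'J q u.
have dec : q (u + h) - P = (q u - P) + tau *: ah + E.
  rewrite /E hM; apply/rowP => i; rewrite !mxE; ring.
rewrite dec dotDr dotDr dotZr in ineq'.
have ah1' : `|ah| <= 1 by rewrite ah1.
have b1 := dot_lower (q u - P) ah1'.
have b3 := dot_lower E ah1'.
have b2 : 1 <= dot ah ah by have := norm2_le_dot ah; rewrite ah1 expr1n.
have b4 : `|E| <= eps * `|h| by apply: Hd1; exact: le_lt_trans hn tauC1.
have b5 : `|z - P| <= k * `|z - q u|.
  have e1 := norm2_le_dot (z - P).
  have e2 := Pmin _ Yy0.
  have e3 := dot_le (z - q u).
  rewrite -/k in e3.
  have n1 : 0 <= `|z - P| := normr_ge0 _.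
  have n2 : 0 <= k * `|z - q u| by apply: mulr_ge0; [lra|exact: normr_ge0].
  rewrite -(@ler_pXn2r _ 2) ?nnegrE // exprMn; lra.
have b6 : `|q u - P| <= `|q u - z| + `|z - P| := ler_distD _ _ _.
rewrite [`|z - q u|]distrC in b5.
have f1 : k * `|q u - P| <= tau / 2.
  have : `|q u - P| <= (1 + k) * eta.
    have : k * `|q u - z| <= k * eta by apply: ler_wpM2l; [lra | exact: ltW].
    rewrite mulrDl mul1r; lra.
  move=> H; apply: (le_trans (ler_wpM2l _ H)); first lra.
  have k2 : 0 < 4 * k ^+ 2 by rewrite mulr_gt0 // exprn_gt0; lra.
  have e4 : eta * (4 * k ^+ 2) = tau by rewrite /eta mulfVK // gt_eqF.
  have kk : k * (1 + k) <= 2 * k ^+ 2 by rewrite expr2; nra.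
  rewrite mulrA; apply: (le_trans (ler_wpM2r (ltW eta0) kk)).
  rewrite -e4; nra.
have f2 : k * `|E| <= tau / 4.
  have : k * `|E| <= k * (eps * (tau * C)).
    apply: ler_wpM2l; first lra.
    apply: (le_trans b4); apply: ler_wpM2l; [exact: ltW | exact: hn].
  suff -> : k * (eps * (tau * C)) = tau / 4 by [].
  rewrite /eps; field.
  by apply/andP; split; apply: lt0r_neq0; lra.
have f3 : tau <= tau * dot ah ah by rewrite -[X in X <= _]mulr1 ler_wpM2l // ltW.
lra.
Qed.
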